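(* Let $n\ge 2$ and let $Q\in\mathbb{R}^{n\times n}$ be an irreducible generator matrix of a continuous-time Markov chain ($q_{ij}\ge0$ for $i\ne j$, $q_{ii}=-\sum_{j\ne i}q_{ij}$). Let $B=\operatorname{diag}(\beta_i)$ with $\beta_i>0$ and $D=\operatorname{diag}(\delta_i)$ with $\delta_i\ge 0$. Let $(\boldsymbol p(t),\boldsymbol x(t))$ solve \[ \dot{\boldsymbol p}=(B-D-L(\boldsymbol x))\boldsymbol p-\operatorname{diag}(\boldsymbol p)B\boldsymbol p,\qquad \dot{\boldsymbol x}=Q^\top\boldsymbol x, \] with $\boldsymbol p(0)\in[0,1]^n$ and $\boldsymbol x(0)$ having entries in $(0,1)$ summing to $1$, where $L(\boldsymbol x)$ has entries $l_{ii}(\boldsymbol x)=\sum_{j\ne i}q_{ji}\frac{x_j}{x_i}$ and $l_{ij}(\boldsymbol x)=-q_{ji}\frac{x_j}{x_i}$ for $i\ne j$. If $p_i(t)\to 0$ as $t\to\infty$ for some $i\in\{1,\dots,n\}$, then $\boldsymbol p(t)\to\boldsymbol 0$ as $t\to\infty$. *)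

(* Defs.v *)
From HB Require Import structures.
From mathcomp Require Import all_boot all_order all_algebra.
From mathcomp Require Import all_classical all_reals all_analysis.
Set Implicit Arguments. Unset Strict Implicit. Unset Printing Implicit Defensive.
Import Order.TTheory GRing.Theory Num.Theory.
Import numFieldNormedType.Exports.
Local Open Scope classical_set_scope.
Local Open Scope ring_scope.

Definition generator (R : realType) (n : nat) (Q : 'M[R]_n) : Prop :=
  (forall i j : 'I_n, i != j -> 0 <= Q i j) /\
  (forall i : 'I_n, Q i i = - \sum_(j < n | j != i) Q i j).

Definition irreducible_gen (R : realType) (n : nat) (Q : 'M[R]_n) : Prop :=
  forall i j : 'I_n, connect (fun a b : 'I_n => 0 < Q a b) i j.

Definition Lmat (R : realType) (n : nat) (Q : 'M[R]_n) (x : 'I_n -> R) : 'M[R]_n :=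
  \matrix_(i, j) (if i == j then \sum_(k < n | k != i) Q k i * x k / x i
                  else - (Q j i * x j / x i)).

Definition diagf (R : realType) (n : nat) (v : 'I_n -> R) : 'M[R]_n :=
  \matrix_(i, j) (if i == j then v i else 0).

Definition p_rhs (R : realType) (n : nat) (Q : 'M[R]_n) (beta delta : 'I_n -> R)
  (x p : 'I_n -> R) (i : 'I_n) : R :=
  \sum_(j < n) (diagf beta - diagf delta - Lmat Q x) i j * p j
  - p i * \sum_(j < n) diagf beta i j * p j.

Definition x_rhs (R : realType) (n : nat) (Q : 'M[R]_n) (x : 'I_n -> R) (i : 'I_n) : R :=
  \sum_(j < n) Q^T i j * x j.

Definition is_solution (R : realType) (n : nat) (Q : 'M[R]_n) (beta delta : 'I_n -> R)
  (p x : R -> 'I_n -> R) : Prop :=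
  (forall i : 'I_n, {within `[0, +oo[, continuous (fun t => p t i)}) /\
  (forall i : 'I_n, {within `[0, +oo[, continuous (fun t => x t i)}) /\
  (forall (t : R) (i : 'I_n), 0 < t ->
      is_derive t 1 (fun s => p s i) (p_rhs Q beta delta (x t) (p t) i)) /\
  (forall (t : R) (i : 'I_n), 0 < t ->
      is_derive t 1 (fun s => x s i) (x_rhs Q (x t) i)).

(* Main.v *)
Require Import Defs.
From HB Require Import structures.
From mathcomp Require Import all_boot all_order all_algebra.
From mathcomp Require Import all_classical all_reals all_analysis.
From mathcomp Require Import ring lra.
Import Order.TTheory GRing.Theory Num.Theory.
Import numFieldNormedType.Exports.
Local Open Scope classical_set_scope.
Local Open Scope ring_scope.
Set Implicit Arguments.
Unset Strict Implicit.

Lemma deriv_cont (R : realType) (f : R -> R) (t d : R) :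
  is_derive t 1 f d -> {for t, continuous f}.
Proof.
case=> H _; apply: differentiable_continuous.
by apply/derivable1_diffP.
Qed.

Lemma MVT2 (R : realType) (f df : R -> R) (a b : R) : a < b ->
  (forall u, a <= u <= b -> is_derive u 1 f (df u)) ->
  exists2 c, a < c < b & f b - f a = df c * (b - a).
Proof.
move=> ab H.
have H1 : forall u, u \in `]a, b[ -> is_derive u 1 f (df u).
  move=> u; rewrite in_itv /= => /andP[h1 h2]; apply: H.
  by rewrite !ltW.
have H2 : {within `[a, b], continuous f}.
  apply: derivable_within_continuous => u; rewrite in_itv /= => hu.
  by case: (H u hu).
have [c c1 c2] := MVT ab H1 H2.
by exists c => //; move: c1; rewrite in_itv.
Qed.

Lemma right_fam (R : realType) (n : nat) (F : 'I_n -> R -> R) (T : R) (m : 'I_n -> R) :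
 (forall i, {within `[0, +oo[, continuous (F i)}) -> 0 <= T -> (forall i, 0 < m i) ->
 exists2 d, 0 < d & forall t, T <= t < T + d -> forall i, `|F i T - F i t| < m i.
Proof.
move=> hF T0 hm.
have H i : \forall t \near within `[0, +oo[ (nbhs T), `|F i T - F i t| < m i.
  have := (subspace_continuousP _ _).1 (hF i) T.
  rewrite /= in_itv /= andbT => /(_ T0) hc.
  by move/cvgr_dist_lt: hc => /(_ _ (hm i)).
have : \forall t \near within `[0, +oo[ (nbhs T), forall i, `|F i T - F i t| < m i.
  by apply: filter_forall.
rewrite /within /= => /nbhs_ballP [e e0 He].
exists e => // t /andP[t1 t2] i.
apply: (He t) => //.
  rewrite -ball_normE /= distrC ger0_norm ?subr_ge0 //.
  by rewrite ltrBlDl.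
by rewrite /= in_itv /= andbT (le_trans T0).
Qed.

Lemma touch (R : realType) (g : R -> R) (T d : R) :
  is_derive T 1 g d -> 0 < d -> g T <= 0 -> 0 < T ->
  exists t, 0 <= t < T /\ g t < 0.
Proof.
case=> Hd Hv d0 gT T0.
have Hc : (fun h => h^-1 *: ((g \o shift T) (h *: 1) - g T)) @ 0^' --> d.
  by rewrite -Hv.
move/cvgr_dist_lt: Hc => /(_ _ d0).
rewrite /within /= => /nbhs_ballP [e e0 He].
have m0 : 0 < Num.min e T by rewrite lt_min e0 T0.
have me : Num.min e T <= e by rewrite ge_min lexx.
have mT : Num.min e T <= T by rewrite ge_min lexx orbT.
have hlt : - (Num.min e T / 2) < 0 by rewrite oppr_lt0 divr_gt0.
have hb : ball 0 e (- (Num.min e T / 2)).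
  rewrite -ball_normE /= sub0r opprK ger0_norm ?divr_ge0 ?ltW //; lra.
have := He _ hb (ltr0_neq0 hlt).
rewrite -[_%:A]/(_ * 1) mulr1 => H.
have q0 : 0 < (- (Num.min e T / 2))^-1 * (g (- (Num.min e T / 2) + T) - g T).
  move: H; rewrite /GRing.scale /=.
  set q := (_ * _).
  rewrite ltr_norml => /andP[_ H]; lra.
move: q0; rewrite nmulr_rgt0 ?invr_lt0 // subr_lt0 => H2.
exists (- (Num.min e T / 2) + T); split; last by apply: lt_le_trans H2 gT.
apply/andP; split; lra.
Qed.

Lemma left_close (R : realType) (g : R -> R) (T : R) :
  0 < T -> {for T, continuous g} -> (forall t, 0 <= t < T -> 0 < g t) -> 0 <= g T.
Proof.
move=> T0 gc gpos; rewrite leNgt; apply/negP => gT.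
have e0 : 0 < - g T by rewrite oppr_gt0.
move/cvgr_dist_lt: gc => /(_ _ e0) /nbhs_ballP [e ep He].
have m0 : 0 < Num.min e T by rewrite lt_min ep T0.
have me : Num.min e T <= e by rewrite ge_min lexx.
have mT : Num.min e T <= T by rewrite ge_min lexx orbT.
have hb : ball T e (T - Num.min e T / 2).
  rewrite -ball_normE /= opprB addrC subrK ger0_norm ?divr_ge0 ?ltW //; lra.
have := He _ hb; rewrite ltr_norml => /andP[H1 H2].
have : 0 < g (T - Num.min e T / 2) by apply: gpos; apply/andP; split; lra.
lra.
Qed.

Lemma cont_ind (R : realType) (P : R -> Prop) (H : R) :
 P 0 ->
 (forall T, 0 < T <= H -> (forall t, 0 <= t < T -> P t) -> P T) ->
 (forall T, 0 <= T < H -> P T -> exists2 d, 0 < d & forall t, T <= t < T + d -> P t) ->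
 forall t, 0 <= t <= H -> P t.
Proof.
move=> P0 Hcl Hop t1 /andP[t10 t1H].
case: (pselect (P t1)) => // nP; exfalso.
pose A := [set s : R | 0 <= s <= t1 /\ (forall u, 0 <= u <= s -> P u)].
have A0 : A 0.
  split; first by rewrite lexx t10.
  by move=> u /andP[u1 u2]; have -> : u = 0 by apply/eqP; rewrite eq_le u1 u2.
have An : A !=set0 by exists 0.
have Aub : ubound A t1 by move=> s [/andP[_ ->]].
have hs : has_sup A by split => //; exists t1.
set T := sup A.
have T0 : 0 <= T by apply: sup_upper_bound.
have Tt1 : T <= t1 by apply: ge_sup.
have Hb : forall u, 0 <= u < T -> P u.
  move=> u /andP[u0 uT].
  have uT' : 0 < T - u by rewrite subr_gt0.
  have [s [_ Hs] us] := sup_adherent uT' hs.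
  apply: Hs; rewrite u0 /=; move: us; rewrite /T; lra.
have PT : P T.
  have [T0e|Tn] := eqVneq T 0; first by rewrite T0e.
  apply: Hcl Hb.
  by rewrite lt_neqAle eq_sym Tn T0 /= (le_trans Tt1).
have [Te|Tn] := eqVneq T t1; first by apply: nP; rewrite -Te.
have Tlt : T < t1 by rewrite lt_neqAle Tn Tt1.
have [d d0 Hd] := Hop T (introT andP (conj T0 (lt_le_trans Tlt t1H))) PT.
pose s' := Num.min (T + d / 2) t1.
have s'1 : s' <= t1 by rewrite ge_min lexx orbT.
have s'2 : s' <= T + d / 2 by rewrite ge_min lexx.
have s'3 : T < s' by rewrite lt_min Tlt andbT; lra.
have As' : A s'.
  split; first by rewrite s'1 andbT; lra.
  move=> u /andP[u0 us].
  have [uT|Tu] := ltP u T; first by apply: Hb; rewrite u0 uT.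
  apply: Hd; rewrite Tu /=; lra.
have := sup_upper_bound hs As'; rewrite -/T; lra.
Qed.

Lemma is_derive_expc (R : realType) (c u : R) :
  is_derive u 1 (fun s => expR (c * s)) (c * expR (c * u)).
Proof.
have H1 : is_derive u 1 (fun s : R => c * s) c.
  apply: is_derive_eq (is_deriveZ c (is_derive_id u 1)) _.
  by rewrite -[c%:A]/(c * 1) mulr1.
have := is_derive1_comp (is_derive_expR (c * u)) H1.
by move/is_derive_eq; apply; rewrite mulrC.
Qed.

Lemma growG (R : realType) (f df : R -> R) (c A a b : R) : 0 < a -> a <= b ->
  (forall u, a <= u <= b -> is_derive u 1 f (df u)) ->
  (forall u, a < u < b -> A <= expR (c * u) * (df u + c * f u)) ->
  expR (c * a) * f a + A * (b - a) <= expR (c * b) * f b.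
Proof.
move=> a0 ab Hd HA.
have [aeb|aneb] := eqVneq a b; first by rewrite aeb subrr mulr0 addr0.
have alb : a < b by rewrite lt_neqAle aneb ab.
pose g u := expR (c * u) * f u - A * u.
have Hg : forall u, a <= u <= b ->
    is_derive u 1 g (expR (c * u) * (df u + c * f u) - A).
  move=> u hu.
  have H1 := is_deriveM (@is_derive_expc R c u) (Hd u hu).
  have H2 : is_derive u 1 (fun s : R => A * s) A.
    apply: is_derive_eq (is_deriveZ A (is_derive_id u 1)) _.
    by rewrite -[A%:A]/(A * 1) mulr1.
  have := is_deriveB H1 H2.
  move/is_derive_eq; apply.
  rewrite /GRing.scale /=; ring.
have [ξ hξ eq] := @MVT2 R g _ a b alb Hg.
have : 0 <= g b - g a.
  rewrite eq; apply: mulr_ge0; last by rewrite subr_ge0 ltW.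
  by rewrite subr_ge0; apply: HA.
rewrite /g; lra.
Qed.

Lemma within_sum (R : realType) (n : nat) (A : set R) (F : 'I_n -> R -> R) :
  (forall i, {within A, continuous (F i)}) ->
  {within A, continuous (fun t => \sum_(i < n) F i t)}.
Proof.
move=> H; apply/subspace_continuousP => x Ax.
apply: cvg_big => //.
  exact: add_continuous.
by move=> i _; exact: ((subspace_continuousP _ _).1 (H i) x Ax).
Qed.

Lemma x_rhsE (R : realType) (n : nat) (Q : 'M[R]_n) (x : 'I_n -> R) k :
  x_rhs Q x k = \sum_(j < n) Q j k * x j.
Proof. by apply: eq_bigr => j _; rewrite mxE. Qed.

Definition cQ (R : realType) (n : nat) (Q : 'M[R]_n) := \sum_(l < n) - Q l l.

Lemma diag_le0 (R : realType) (n : nat) (Q : 'M[R]_n) l :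
  generator Q -> Q l l <= 0.
Proof.
case=> Hoff Hd; rewrite Hd oppr_le0; apply: sumr_ge0 => j jl.
by apply: Hoff; rewrite eq_sym.
Qed.

Lemma cQ_ge (R : realType) (n : nat) (Q : 'M[R]_n) k :
  generator Q -> 0 <= cQ Q + Q k k.
Proof.
move=> G; rewrite /cQ (bigD1 k) //= addrAC addNr add0r.
by apply: sumr_ge0 => l _; rewrite oppr_ge0 diag_le0.
Qed.

Lemma rowsum0 (R : realType) (n : nat) (Q : 'M[R]_n) j :
  generator Q -> \sum_(k < n) Q j k = 0.
Proof.
case=> _ Hd; rewrite (bigD1 j) //= Hd addrC.
by rewrite (eq_bigl (fun k => k != j)) ?subrr // => k.
Qed.

Lemma rhs_lb (R : realType) (n : nat) (Q : 'M[R]_n) (x : 'I_n -> R) k j :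
  generator Q -> (forall l, 0 <= x l) -> j != k ->
  Q j k * x j <= x_rhs Q x k + cQ Q * x k.
Proof.
move=> G x0 jk; rewrite x_rhsE (bigD1 k) //= -addrA.
rewrite [Q k k * _ + _]addrC -addrA -mulrDl.
rewrite -[X in X <= _]addr0 lerD //; last first.
  by apply: mulr_ge0 => //; exact: (cQ_ge k G).
rewrite (bigD1 j) //= ler_wpDr //.
apply: sumr_ge0 => l /andP[lk lj]; apply: mulr_ge0 => //.
by case: G => Hoff _; apply: Hoff.
Qed.

Lemma rhs_ge0 (R : realType) (n : nat) (Q : 'M[R]_n) (x : 'I_n -> R) k :
  generator Q -> (forall l, 0 <= x l) ->
  0 <= x_rhs Q x k + cQ Q * x k.
Proof.
move=> G x0; rewrite x_rhsE (bigD1 k) //= -addrA.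
rewrite [Q k k * _ + _]addrC -addrA -mulrDl.
apply: addr_ge0; last by apply: mulr_ge0 => //; exact: (cQ_ge k G).
apply: sumr_ge0 => l lk; apply: mulr_ge0 => //.
by case: G => Hoff _; apply: Hoff.
Qed.

Lemma xpos (R : realType) (n : nat) (Q : 'M[R]_n) (beta delta : 'I_n -> R)
  (p x : R -> 'I_n -> R) :
  generator Q -> is_solution Q beta delta p x -> (forall i, 0 < x 0 i) ->
  forall t, 0 <= t -> forall k, 0 < x t k.
Proof.
move=> G [_ [xc [_ xd]]] x0 t t0.
apply: (@cont_ind R (fun s => forall k, 0 < x s k) t) => //; last by rewrite t0 lexx.
  move=> T /andP[T0 _] Hb k.
  have T20 : 0 < T / 2 by rewrite divr_gt0.
  have := @growG R (fun s => x s k) (fun s => x_rhs Q (x s) k) (cQ Q) 0 (T / 2) T T20.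
  have -> : T / 2 <= T by lra.
  move=> /(_ isT) H.
  have : expR (cQ Q * (T / 2)) * x (T / 2) k + 0 * (T - T / 2) <= expR (cQ Q * T) * x T k.
    apply: H.
      move=> u /andP[u1 _]; apply: xd; exact: lt_le_trans u1.
    move=> u /andP[u1 u2]; apply: mulr_ge0; first exact: expR_ge0.
    apply: rhs_ge0 => // l; apply: ltW; apply: Hb.
    by rewrite u2 andbT ltW // (lt_trans T20).
  rewrite mul0r addr0 => H2.
  have H3 : 0 < expR (cQ Q * (T / 2)) * x (T / 2) k.
    by rewrite mulr_gt0 ?expR_gt0 // Hb // ltW //= ltr_pdivrMr //; lra.
  have := lt_le_trans H3 H2.
  by rewrite pmulr_rgt0 // expR_gt0.
move=> T /andP[T0 _] PT.
have [d d0 Hd] := @right_fam R n (fun i s => x s i) T (fun i => x T i) xc T0 PT.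
exists d => // s hs k.
have := Hd s hs k; rewrite ltr_norml => /andP[_ h]; lra.
Qed.

Lemma sum_rhs0 (R : realType) (n : nat) (Q : 'M[R]_n) (x : 'I_n -> R) :
  generator Q -> \sum_(k < n) x_rhs Q x k = 0.
Proof.
move=> G; under eq_bigr do rewrite x_rhsE.
rewrite exchange_big /=; apply: big1 => j _.
by rewrite -mulr_suml rowsum0 // mul0r.
Qed.

Lemma xsum (R : realType) (n : nat) (Q : 'M[R]_n) (beta delta : 'I_n -> R)
  (p x : R -> 'I_n -> R) :
  generator Q -> is_solution Q beta delta p x -> \sum_(i < n) x 0 i = 1 ->
  forall t, 0 <= t -> \sum_(k < n) x t k = 1.
Proof.
move=> G [_ [xc [_ xd]]] s1 t; rewrite le_eqVlt => /orP[/eqP <-|t0] //.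
pose S := fun s => \sum_(k < n) x s k.
have HS : forall s : R, 0 < s -> is_derive s 1 S 0.
  move=> s s0.
  have := @is_derive_sum R _ _ n (fun k u => x u k) s 1 (fun k => x_rhs Q (x s) k) (fun k => xd s k s0).
  rewrite fct_sumE sum_rhs0 //.
have H1 : forall u, u \in `]0, t[ -> is_derive u 1 S ((fun _ => 0) u).
  by move=> u; rewrite in_itv /= => /andP[u0 _]; apply: HS.
have H2 : {within `[0, t], continuous S}.
  have sub : `[0, t] `<=` `[0, +oo[.
    by move=> u; rewrite /= !in_itv /= => /andP[-> _].
  exact: (continuous_subspaceW sub (@within_sum R n _ (fun i s => x s i) xc)).
have [c _] := MVT t0 H1 H2.
rewrite mul0r /S => /eqP; rewrite subr_eq0 => /eqP ->; exact: s1.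
Qed.

Lemma xmono (R : realType) (n : nat) (Q : 'M[R]_n) (x : R -> 'I_n -> R) (k : 'I_n) :
  generator Q ->
  (forall (t : R) (i : 'I_n), 0 < t -> is_derive t 1 (fun s => x s i) (x_rhs Q (x t) i)) ->
  (forall t, 0 <= t -> forall i, 0 < x t i) ->
  forall s u, 0 < s -> s <= u -> expR (cQ Q * s) * x s k <= expR (cQ Q * u) * x u k.
Proof.
move=> G xd xp s u s0 su.
have := @growG R (fun s => x s k) (fun s => x_rhs Q (x s) k) (cQ Q) 0 s u s0 su.
rewrite mul0r addr0; apply.
  move=> v /andP[v1 _]; apply: xd; exact: lt_le_trans v1.
move=> v /andP[v1 v2]; apply: mulr_ge0; first exact: expR_ge0.
apply: rhs_ge0 => // l; apply: ltW; apply: xp.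
by apply: ltW; apply: lt_trans v1.
Qed.

Lemma xdecay (R : realType) (n : nat) (Q : 'M[R]_n) (x : R -> 'I_n -> R) (k : 'I_n) :
  generator Q ->
  (forall (t : R) (i : 'I_n), 0 < t -> is_derive t 1 (fun s => x s i) (x_rhs Q (x t) i)) ->
  (forall t, 0 <= t -> forall i, 0 < x t i) ->
  forall s T, 0 < s -> 0 <= T -> expR (- (cQ Q * T)) * x s k <= x (s + T) k.
Proof.
move=> G xd xp s T s0 T0.
have := @xmono R n Q x k G xd xp s (s + T) s0.
rewrite lerDl => /(_ T0).
rewrite mulrDr expRD -mulrA ler_pM2l ?expR_gt0 // => H.
rewrite expRN ler_pdivrMl ?expR_gt0 //.
Qed.

Lemma xedge (R : realType) (n : nat) (Q : 'M[R]_n) (x : R -> 'I_n -> R) (j k : 'I_n) :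
  generator Q ->
  (forall (t : R) (i : 'I_n), 0 < t -> is_derive t 1 (fun s => x s i) (x_rhs Q (x t) i)) ->
  (forall t, 0 <= t -> forall i, 0 < x t i) ->
  0 < Q j k ->
  forall s, 0 < s -> Q j k * expR (- cQ Q) * x s j <= x (s + 1) k.
Proof.
move=> G xd xp Qjk s s0.
have jk : j != k.
  apply/eqP => ejk; move: Qjk; rewrite ejk => h.
  by have := diag_le0 k G; rewrite leNgt h.
have := @growG R (fun s => x s k) (fun s => x_rhs Q (x s) k) (cQ Q)
   (Q j k * (expR (cQ Q * s) * x s j)) s (s + 1) s0.
rewrite lerDl ler01 addrAC subrr add0r mulr1 => /(_ isT) H0.
have H : expR (cQ Q * s) * x s k + Q j k * (expR (cQ Q * s) * x s j) <=
    expR (cQ Q * (s + 1)) * x (s + 1) k.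
  apply: H0.
    move=> v /andP[v1 _]; apply: xd; exact: lt_le_trans v1.
  move=> v /andP[v1 v2].
  have xv : forall l, 0 <= x v l by move=> l; apply: ltW; apply: xp; apply: ltW; apply: lt_trans v1.
  have H1 := rhs_lb G xv jk.
  have H2 := @xmono R n Q x j G xd xp s v s0 (ltW v1).
  apply: (le_trans (y := Q j k * (expR (cQ Q * v) * x v j))).
    by rewrite ler_pM2l.
  rewrite mulrCA ler_pM2l ?expR_gt0 //.
have H3 : 0 <= expR (cQ Q * s) * x s k.
  by apply: mulr_ge0; [exact: expR_ge0| apply: ltW; apply: xp; apply: ltW].
have H5 : Q j k * (expR (cQ Q * s) * x s j) <=
    expR (cQ Q * s) * x s k + Q j k * (expR (cQ Q * s) * x s j) by rewrite lerDr.
have H4 := le_trans H5 H.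
move: H4; rewrite mulrDr expRD mulr1 mulrCA -mulrA ler_pM2l ?expR_gt0 //.
by rewrite expRN mulrAC ler_pdivrMr ?expR_gt0 // [x (s + 1) k * _]mulrC.
Qed.

Lemma xpath (R : realType) (n : nat) (Q : 'M[R]_n) (x : R -> 'I_n -> R) (j k : 'I_n) :
  generator Q ->
  (forall (t : R) (i : 'I_n), 0 < t -> is_derive t 1 (fun s => x s i) (x_rhs Q (x t) i)) ->
  (forall t, 0 <= t -> forall i, 0 < x t i) ->
  connect (fun a b : 'I_n => 0 < Q a b) j k ->
  exists tau : R, 0 <= tau /\ forall T, tau <= T ->
    exists g : R, 0 < g /\ forall s, 0 < s -> g * x s j <= x (s + T) k.
Proof.
move=> G xd xp /connectP [pth Hp ->] {k}.
elim: pth j Hp => [|v pth IH] j /=.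
  move=> _; exists 0; split => // T T0.
  exists (expR (- (cQ Q * T))); split; first exact: expR_gt0.
  by move=> s s0; apply: xdecay.
move=> /andP[Qjv Hp].
have [tau [tau0 Htau]] := IH v Hp.
exists (tau + 1); split; first by rewrite addr_ge0.
move=> T HT.
have HT' : tau <= T - 1 by rewrite lerBrDr.
have [g [g0 Hg]] := Htau (T - 1) HT'.
exists (g * (Q j v * expR (- cQ Q))); split.
  by rewrite !mulr_gt0 ?expR_gt0.
move=> s s0.
have s10 : 0 < s + 1 by rewrite addr_gt0.
have := Hg (s + 1) s10.
have -> : s + 1 + (T - 1) = s + T by ring.
move=> H1.
apply: le_trans H1.
rewrite -mulrA ler_pM2l //.
exact: xedge.
Qed.

Lemma xlow (R : realType) (n : nat) (Q : 'M[R]_n) (x : R -> 'I_n -> R) :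
  generator Q -> irreducible_gen Q ->
  (forall (t : R) (i : 'I_n), 0 < t -> is_derive t 1 (fun s => x s i) (x_rhs Q (x t) i)) ->
  (forall t, 0 <= t -> forall i, 0 < x t i) ->
  (forall t, 0 <= t -> \sum_(k < n) x t k = 1) ->
  exists T1 : R, 0 < T1 /\ exists m : R, 0 < m /\ forall t, T1 <= t -> forall k, m <= x t k.
Proof.
move=> G Irr xd xp xs.
have H1 : forall jk : 'I_n * 'I_n, exists tau : R, 0 <= tau /\ forall T, tau <= T ->
    exists g : R, 0 < g /\ forall s, 0 < s -> g * x s jk.1 <= x (s + T) jk.2.
  by move=> jk; apply: xpath => //; apply: Irr.
have [tf Htf] := choice H1.
set Sg := \sum_(jk : 'I_n * 'I_n) tf jk.
have Sg0 : 0 <= Sg by apply: sumr_ge0 => jk _; case: (Htf jk).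
have tf_le : forall jk, tf jk <= Sg.
  move=> jk; rewrite /Sg (bigD1 jk) //= lerDl.
  by apply: sumr_ge0 => jk' _; case: (Htf jk').
have H2 : forall jk : 'I_n * 'I_n, exists g : R, 0 < g /\
    forall s, 0 < s -> g * x s jk.1 <= x (s + Sg) jk.2.
  by move=> jk; case: (Htf jk) => _ /(_ Sg (tf_le jk)).
have [gf Hgf] := choice H2.
set S2 := \sum_(jk : 'I_n * 'I_n) (gf jk)^-1.
have S20 : 0 <= S2 by apply: sumr_ge0 => jk _; rewrite invr_ge0 ltW //; case: (Hgf jk).
exists (Sg + 1); split; first by rewrite ltr_wpDl.
exists (1 + S2)^-1; split; first by rewrite invr_gt0 ltr_wpDr.
move=> t Ht k.
set s := t - Sg.
have s0 : 0 < s by rewrite /s subr_gt0; apply: lt_le_trans Ht; rewrite ltrDl.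
have ts : t = s + Sg by rewrite /s subrK.
have Hj : forall j, x s j <= (gf (j, k))^-1 * x t k.
  move=> j; case: (Hgf (j, k)) => g0 /(_ s s0) /= h.
  by rewrite ler_pdivlMl // ts.
have H3 : 1 <= x t k * \sum_(j < n) (gf (j, k))^-1.
  rewrite -(xs s (ltW s0)) mulr_sumr; apply: ler_sum => j _.
  by rewrite mulrC; apply: Hj.
have H4 : \sum_(j < n) (gf (j, k))^-1 <= 1 + S2.
  apply: le_trans (ler_wpDl ler01 (lexx _)).
  have -> : S2 = \sum_(i < n) \sum_(j < n) (gf (i, j))^-1.
    by rewrite pair_big /=; apply: eq_bigr => -[i j] _.
  apply: ler_sum => j _.
  rewrite (bigD1 k) //= lerDl; apply: sumr_ge0 => i _.
  by rewrite invr_ge0 ltW //; case: (Hgf (j, i)).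
have xt0 : 0 <= x t k by apply: ltW; apply: xp; apply: le_trans Ht; rewrite addr_ge0.
have H5 := le_trans H3 (ler_wpM2l xt0 H4).
by rewrite -[_^-1]mul1r ler_pdivrMr // ltr_wpDr.
Qed.

Lemma p_rhsE (R : realType) (n : nat) (Q : 'M[R]_n) (beta delta : 'I_n -> R)
  (x p : 'I_n -> R) (k : 'I_n) :
  p_rhs Q beta delta x p k = (beta k - delta k - beta k * p k) * p k +
    \sum_(j < n | j != k) (Q j k * x j / x k) * (p j - p k).
Proof.
rewrite /p_rhs (bigD1 k) //= !mxE eqxx.
have -> : \sum_(j < n) diagf beta k j * p j = beta k * p k.
  rewrite (bigD1 k) //= mxE eqxx big1 ?addr0 // => j jk.
  by rewrite mxE eq_sym (negbTE jk) mul0r.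
have -> : \sum_(i < n | true && (i != k))
    (diagf beta - diagf delta - Lmat Q x) k i * p i =
    \sum_(j < n | j != k) (Q j k * x j / x k) * p j.
  apply: eq_bigr => j jk; rewrite !mxE eq_sym (negbTE jk); congr (_ * _).
  by rewrite !subr0 sub0r opprK.
under [X in _ = _ + X]eq_bigr do rewrite mulrBr.
rewrite sumrB -mulr_suml.
set S1 := \sum_(j < n | j != k) _.
set S2 := \sum_(j < n | j != k) _.
set S3 := \sum_(j < n | j != k) _.
have -> : S3 = S1 / x k * p k by rewrite /S3 /S1 -!mulr_suml.
ring.
Qed.

Lemma deriv_lo (R : realType) (f : R -> R) (df eps L T : R) :
  is_derive T 1 f df ->
  is_derive T 1 (fun s => f s + eps * expR (L * s)) (df + eps * (L * expR (L * T))).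
Proof.
move=> H.
have H2 : is_derive T 1 (fun s => eps * expR (L * s)) (eps * (L * expR (L * T))).
  exact: (is_deriveZ eps (@is_derive_expc R L T)).
exact: (is_deriveD H H2).
Qed.

Lemma deriv_hi (R : realType) (f : R -> R) (df eps L T : R) :
  is_derive T 1 f df ->
  is_derive T 1 (fun s => 1 + eps * expR (L * s) - f s) (eps * (L * expR (L * T)) - df).
Proof.
move=> H.
have H2 : is_derive T 1 (fun s => eps * expR (L * s)) (eps * (L * expR (L * T))).
  exact: (is_deriveZ eps (@is_derive_expc R L T)).
have H3 : is_derive T 1 (fun s => 1 + eps * expR (L * s)) (0 + eps * (L * expR (L * T))).
  exact: (is_deriveD (is_derive_cst (1 : R) T 1) H2).
apply: is_derive_eq (is_deriveB H3 H) _.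
by rewrite add0r.
Qed.

Lemma peps (R : realType) (n : nat) (Q : 'M[R]_n) (beta delta : 'I_n -> R)
  (p x : R -> 'I_n -> R) :
  generator Q -> (forall i, 0 <= beta i) -> (forall i, 0 <= delta i) ->
  (forall i, {within `[0, +oo[, continuous (fun t => p t i)}) ->
  (forall (t : R) (i : 'I_n), 0 < t ->
     is_derive t 1 (fun s => p s i) (p_rhs Q beta delta (x t) (p t) i)) ->
  (forall t, 0 <= t -> forall i, 0 < x t i) ->
  (forall i, 0 <= p 0 i <= 1) ->
  forall H eps, 0 < eps -> eps * expR ((2 * \sum_(i < n) beta i + 1) * H) <= 1 ->
  forall t, 0 <= t <= H -> forall k,
   - (eps * expR ((2 * \sum_(i < n) beta i + 1) * t)) < p t k <
     1 + eps * expR ((2 * \sum_(i < n) beta i + 1) * t).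
Proof.
move=> G b0 d0 pc pd xp p0 H eps e0 eH.
set L := 2 * \sum_(i < n) beta i + 1.
have S0 : 0 <= \sum_(i < n) beta i by apply: sumr_ge0.
have L0 : 0 < L by rewrite /L; lra.
have bL : forall i, 2 * beta i < L.
  move=> i; have : beta i <= \sum_(i < n) beta i.
    by rewrite (bigD1 i) //= lerDl; apply: sumr_ge0.
  rewrite /L; lra.
apply: (@cont_ind R (fun t => forall k, - (eps * expR (L * t)) < p t k < 1 + eps * expR (L * t)) H).
- move=> k; rewrite mulr0 expR0 mulr1; case/andP: (p0 k) => h1 h2.
  apply/andP; split; lra.
- move=> T /andP[T0 TH] Hb.
  have eT : eps * expR (L * T) <= 1.
    apply: le_trans eH; rewrite ler_pM2l // ler_expR ler_pM2l //.
  have ep0 : 0 < eps * expR (L * T) by rewrite mulr_gt0 ?expR_gt0.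
  have clo_lo : forall j, - (eps * expR (L * T)) <= p T j.
    move=> j.
    have := @left_close R (fun s => p s j + eps * expR (L * s)) T T0
      (deriv_cont (deriv_lo eps L (pd T j T0))).
    have hh : forall t, 0 <= t < T -> 0 < p t j + eps * expR (L * t).
      move=> t ht; have := Hb t ht j; case/andP => h1 _; lra.
    move=> /(_ hh) /= h; lra.
  have clo_hi : forall j, p T j <= 1 + eps * expR (L * T).
    move=> j.
    have := @left_close R (fun s => 1 + eps * expR (L * s) - p s j) T T0
      (deriv_cont (deriv_hi eps L (pd T j T0))).
    have hh : forall t, 0 <= t < T -> 0 < 1 + eps * expR (L * t) - p t j.
      move=> t ht; have := Hb t ht j; case/andP => _ h2; lra.
    move=> /(_ hh) /= h; lra.
  move=> k.
  have w0 : forall j, j != k -> 0 <= Q j k * x T j / x T k.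
    move=> j jk; apply: mulr_ge0; last by rewrite invr_ge0 ltW // xp // ltW.
    apply: mulr_ge0; last by rewrite ltW // xp // ltW.
    by case: G => Hoff _; apply: Hoff.
  have eL : eps * (L * expR (L * T)) = L * (eps * expR (L * T)) by ring.
  apply/andP; split.
  + rewrite ltNge; apply/negP => hle.
    have eqk : p T k = - (eps * expR (L * T)).
      by apply/le_anti; rewrite hle clo_lo.
    have dpos : 0 < p_rhs Q beta delta (x T) (p T) k + eps * (L * expR (L * T)).
      rewrite p_rhsE eqk eL.
      set eta := eps * expR (L * T).
      have Sg : 0 <= \sum_(j < n | j != k) Q j k * x T j / x T k * (p T j - - eta).
        apply: sumr_ge0 => j jk; apply: mulr_ge0; first exact: w0.
        by rewrite subr_ge0 clo_lo.
      have h1 : beta k * eta <= beta k by rewrite ler_piMr.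
      have h2 : 0 < L - beta k + delta k - beta k * eta.
        by have := bL k; have := d0 k; lra.
      have h3 := mulr_gt0 ep0 h2.
      rewrite -/eta in h3.
      lra.
    have gT0 : p T k + eps * expR (L * T) <= 0 by rewrite eqk addNr.
    have [t [ht gt]] := @touch R (fun s => p s k + eps * expR (L * s)) T _
      (deriv_lo eps L (pd T k T0)) dpos gT0 T0.
    by have := Hb t ht k; case/andP => h1 _; move: gt => /=; lra.
  + rewrite ltNge; apply/negP => hle.
    have eqk : p T k = 1 + eps * expR (L * T).
      by apply/le_anti; rewrite hle clo_hi.
    have dpos : 0 < eps * (L * expR (L * T)) - p_rhs Q beta delta (x T) (p T) k.
      rewrite p_rhsE eqk eL.
      set eta := eps * expR (L * T).
      have eta0 : 0 < eta := ep0.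
      have Sg : \sum_(j < n | j != k) Q j k * x T j / x T k * (p T j - (1 + eta)) <= 0.
        apply: sumr_le0 => j jk; apply: mulr_ge0_le0; first exact: w0.
        by rewrite subr_le0 clo_hi.
      have h1 : 0 <= (delta k + beta k * eta) * (1 + eta).
        by apply: mulr_ge0; [apply: addr_ge0 => //; apply: mulr_ge0 => //; apply: ltW|lra].
      have h3 : 0 < L * eta by rewrite mulr_gt0.
      have -> : (beta k - delta k - beta k * (1 + eta)) * (1 + eta) =
         - ((delta k + beta k * eta) * (1 + eta)) by ring.
      lra.
    have gT0 : 1 + eps * expR (L * T) - p T k <= 0 by rewrite eqk subrr.
    have [t [ht gt]] := @touch R (fun s => 1 + eps * expR (L * s) - p s k) T _
      (deriv_hi eps L (pd T k T0)) dpos gT0 T0.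
    by have := Hb t ht k; case/andP => _ h2; move: gt => /=; lra.
- move=> T /andP[T0 TH] PT.
  have mpos : forall i, 0 < Num.min (p T i + eps * expR (L * T)) (1 + eps * expR (L * T) - p T i).
    move=> i; have := PT i; case/andP => h1 h2; rewrite lt_min; apply/andP; split; lra.
  have [d d0' Hd] := @right_fam R n (fun i s => p s i) T _ pc T0 mpos.
  exists d => // t /andP[t1 t2] i.
  have := Hd t (introT andP (conj t1 t2)) i.
  have em : eps * expR (L * T) <= eps * expR (L * t).
    by rewrite ler_pM2l // ler_expR ler_pM2l.
  have m1 := ge_min (p T i + eps * expR (L * T)) (1 + eps * expR (L * T) - p T i).
  set M := Num.min _ _.
  have hM1 : M <= p T i + eps * expR (L * T) by rewrite /M ge_min lexx.
  have hM2 : M <= 1 + eps * expR (L * T) - p T i by rewrite /M ge_min lexx orbT.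
  rewrite ltr_norml => /andP[h1 h2]; apply/andP; split; lra.
Qed.

Lemma pbound (R : realType) (n : nat) (Q : 'M[R]_n) (beta delta : 'I_n -> R)
  (p x : R -> 'I_n -> R) :
  generator Q -> (forall i, 0 <= beta i) -> (forall i, 0 <= delta i) ->
  (forall i, {within `[0, +oo[, continuous (fun t => p t i)}) ->
  (forall (t : R) (i : 'I_n), 0 < t ->
     is_derive t 1 (fun s => p s i) (p_rhs Q beta delta (x t) (p t) i)) ->
  (forall t, 0 <= t -> forall i, 0 < x t i) ->
  (forall i, 0 <= p 0 i <= 1) ->
  forall t, 0 <= t -> forall k, 0 <= p t k <= 1.
Proof.
move=> G b0 d0 pc pd xp p0 t t0 k.
set L := 2 * \sum_(i < n) beta i + 1.
set e := expR (L * t).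
have e0 : 0 < e by apply: expR_gt0.
have key : forall eps, 0 < eps -> eps * e <= 1 -> - (eps * e) < p t k < 1 + eps * e.
  move=> eps ep h.
  exact: (@peps R n Q beta delta p x G b0 d0 pc pd xp p0 t eps ep h t
            (introT andP (conj t0 (lexx t))) k).
have eV : e^-1 * e = 1 by rewrite mulVf // gt_eqF.
apply/andP; split.
- rewrite leNgt; apply/negP => hneg.
  set eps := Num.min (e^-1) (- p t k / (2 * e)).
  have ep : 0 < eps.
    rewrite lt_min invr_gt0 e0 /= divr_gt0 //; first by rewrite oppr_gt0.
    by rewrite mulr_gt0.
  have h1 : eps * e <= 1.
    rewrite -eV ler_pM2r // /eps ge_min lexx //.
  have h2 : eps * e <= - p t k / 2.
    have -> : - p t k / 2 = (- p t k / (2 * e)) * e.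
      by field; rewrite gt_eqF.
    by rewrite ler_pM2r // /eps ge_min lexx orbT.
  have := key eps ep h1; case/andP => h3 _; lra.
- rewrite leNgt; apply/negP => hpos.
  set eps := Num.min (e^-1) ((p t k - 1) / (2 * e)).
  have ep : 0 < eps.
    rewrite lt_min invr_gt0 e0 /= divr_gt0 //; first by rewrite subr_gt0.
    by rewrite mulr_gt0.
  have h1 : eps * e <= 1.
    rewrite -eV ler_pM2r // /eps ge_min lexx //.
  have h2 : eps * e <= (p t k - 1) / 2.
    have -> : (p t k - 1) / 2 = ((p t k - 1) / (2 * e)) * e.
      by field; rewrite gt_eqF.
    by rewrite ler_pM2r // /eps ge_min lexx orbT.
  have := key eps ep h1; case/andP => _ h3; lra.
Qed.

Definition Cc (R : realType) (n : nat) (Q : 'M[R]_n) (delta : 'I_n -> R) (m : R) (i : 'I_n) :=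
  delta i + \sum_(k < n | k != i) Q k i / m.

Lemma rhsG (R : realType) (n : nat) (Q : 'M[R]_n) (beta delta : 'I_n -> R)
  (x pv : 'I_n -> R) (m : R) (i : 'I_n) :
  generator Q -> (forall k, 0 <= beta k) -> 0 < m -> (forall k, m <= x k <= 1) ->
  (forall k, 0 <= pv k <= 1) ->
  \sum_(k < n | k != i) (Q k i * x k / x i) * pv k - Cc Q delta m i * pv i
    <= p_rhs Q beta delta x pv i.
Proof.
move=> G b0 m0 xb pb.
have xi0 : 0 < x i by case/andP: (xb i) => h _; apply: lt_le_trans h.
have Qoff : forall k, k != i -> 0 <= Q k i by move=> k ki; case: G => Ho _; apply: Ho.
rewrite p_rhsE.
under [X in _ <= _ + X]eq_bigr do rewrite mulrBr.
rewrite sumrB -mulr_suml.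
have H1 : \sum_(k < n | k != i) Q k i * x k / x i <= \sum_(k < n | k != i) Q k i / m.
  apply: ler_sum => k ki.
  rewrite -mulrA ler_wpM2l ?Qoff //.
  case/andP: (xb k) => _ xk1.
  rewrite ler_pdivrMr //; apply: le_trans xk1 _.
  rewrite ler_pdivlMl // mulr1; by case/andP: (xb i).
have pi0 : 0 <= pv i by case/andP: (pb i).
have pi1 : pv i <= 1 by case/andP: (pb i).
have H2 := ler_wpM2r pi0 H1.
have H3 : - delta i * pv i <= (beta i - delta i - beta i * pv i) * pv i.
  rewrite ler_wpM2r //; have := b0 i; nra.
rewrite /Cc mulrDl.
move: H2 H3; lra.
Qed.

Lemma pedge (R : realType) (n : nat) (Q : 'M[R]_n) (beta delta : 'I_n -> R)
  (p x : R -> 'I_n -> R) (i j : 'I_n) (T1 m : R) :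
  generator Q -> (forall k, 0 <= beta k) -> (forall k, 0 <= delta k) ->
  (forall (t : R) (k : 'I_n), 0 < t ->
     is_derive t 1 (fun s => p s k) (p_rhs Q beta delta (x t) (p t) k)) ->
  0 < T1 -> 0 < m -> (forall t, T1 <= t -> forall k, m <= x t k <= 1) ->
  (forall t, T1 <= t -> forall k, 0 <= p t k <= 1) ->
  0 < Q j i -> p t i @[t --> +oo] --> (0 : R) -> p t j @[t --> +oo] --> (0 : R).
Proof.
move=> G b0 d0 pd T10 m0 xb pb Qji hi.
have ji : j != i.
  apply/eqP => eji; move: Qji; rewrite eji => h.
  by have := diag_le0 i G; rewrite leNgt h.
have Qoff : forall k l, k != l -> 0 <= Q k l by move=> k l kl; case: G => Ho _; apply: Ho.
have Cc0 : forall l, 0 <= Cc Q delta m l.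
  move=> l; rewrite /Cc addr_ge0 //; apply: sumr_ge0 => k kl.
  by rewrite divr_ge0 ?Qoff // ltW.
set C := Cc Q delta m i.
set K := Cc Q delta m j + 1.
have K0 : 0 < K by rewrite /K; have := Cc0 j; lra.
have lowj : forall t, T1 <= t -> - K <= p_rhs Q beta delta (x t) (p t) j.
  move=> t tT; apply: le_trans _ (@rhsG R n Q beta delta (x t) (p t) m j G b0 m0 (xb t tT) (pb t tT)).
  have S0 : 0 <= \sum_(k < n | k != j) Q k j * x t k / x t j * p t k.
    apply: sumr_ge0 => k kj; apply: mulr_ge0; last by case/andP: (pb t tT k).
    apply: mulr_ge0; first apply: mulr_ge0; first exact: Qoff.
      by case/andP: (xb t tT k) => h _; apply: le_trans h; apply: ltW.
    by rewrite invr_ge0; case/andP: (xb t tT j) => h _; apply: le_trans h; apply: ltW.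
  have := Cc0 j; case/andP: (pb t tT j) => h1 h2.
  have : Cc Q delta m j * p t j <= Cc Q delta m j by rewrite ler_piMr ?Cc0.
  rewrite /K; lra.
have lowi : forall t, T1 <= t ->
    Q j i * m * p t j - C * p t i <= p_rhs Q beta delta (x t) (p t) i.
  move=> t tT; apply: le_trans _ (@rhsG R n Q beta delta (x t) (p t) m i G b0 m0 (xb t tT) (pb t tT)).
  rewrite lerD2r /C (bigD1 j) //= -[X in X <= _]addr0 lerD //.
    apply: ler_wpM2r; first by case/andP: (pb t tT j).
    rewrite -mulrA; apply: ler_wpM2l; first exact: ltW.
    have xi0 : 0 < x t i by case/andP: (xb t tT i) => h _; apply: lt_le_trans h.
    rewrite ler_pdivlMr //; case/andP: (xb t tT j) => h1 _.
    apply: le_trans h1; rewrite ger_pMr //; by case/andP: (xb t tT i).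
  apply: sumr_ge0 => k /andP[ki kj]; apply: mulr_ge0; last by case/andP: (pb t tT k).
  apply: mulr_ge0; first apply: mulr_ge0; first exact: Qoff.
    by case/andP: (xb t tT k) => h _; apply: le_trans h; apply: ltW.
  by rewrite invr_ge0; case/andP: (xb t tT i) => h _; apply: le_trans h; apply: ltW.
apply/cvgrPdist_lt => eps e0.
have C0 : 0 <= C := Cc0 i.
set a := Q j i * m * eps / 4.
have a0 : 0 < a by rewrite /a !mulr_gt0.
set h := eps / (2 * K).
have h0 : 0 < h by rewrite /h divr_gt0 // mulr_gt0.
have hK : K * h = eps / 2 by rewrite /h; field; rewrite gt_eqF.
set eta := Num.min (a * h / 2) (a / (C + 1)).
have C10 : 0 < C + 1 by lra.
have eta0 : 0 < eta.
  rewrite /eta lt_min; apply/andP; split; apply: divr_gt0 => //; exact: mulr_gt0.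
have eta1 : eta <= a * h / 2 by rewrite /eta ge_min lexx.
have eta2 : C * eta <= a.
  apply: (le_trans (y := C * (a / (C + 1)))).
    by rewrite ler_wpM2l // /eta ge_min lexx orbT.
  rewrite mulrA ler_pdivrMr //; nra.
move/cvgrPdist_lt: hi => /(_ eta eta0).
case=> M [Mr HM].
exists (Num.max M T1); split; first exact: num_real.
move=> t; rewrite gt_max => /andP[tM tT].
have tT' : T1 <= t by apply: ltW.
have t0 : 0 < t by apply: lt_trans tT.
have pdd : forall k u, t <= u -> is_derive u 1 (fun s => p s k) (p_rhs Q beta delta (x u) (p u) k).
  by move=> k u tu; apply: pd; apply: lt_le_trans tu.
have [pj0 pj1] := andP (pb t tT' j).
rewrite sub0r normrN ger0_norm //.
rewrite ltNge; apply/negP => hge.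
have pjlow : forall u, t <= u <= t + h -> eps / 2 <= p u j.
  move=> u /andP[u1 u2].
  have [ut|ut] := eqVneq u t; first by rewrite ut; lra.
  have tu : t < u by rewrite lt_neqAle eq_sym ut u1.
  have [c /andP[c1 c2] Hc] := @MVT2 R (fun s => p s j)
     (fun s => p_rhs Q beta delta (x s) (p s) j) t u tu
     (fun v hv => pdd j v (proj1 (andP hv))).
  have lc := lowj c (ltW (le_lt_trans tT' c1)).
  have ut0 : 0 <= u - t by rewrite subr_ge0.
  have h1 := ler_wpM2r ut0 lc.
  have h2 : K * (u - t) <= K * h by apply: ler_wpM2l; [apply: ltW|lra].
  move: Hc h1 h2 hK => /= Hc h1 h2 hK'; lra.
have th : t < t + h by rewrite ltrDl.
have [c /andP[c1 c2] Hc] := @MVT2 R (fun s => p s i)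
   (fun s => p_rhs Q beta delta (x s) (p s) i) t (t + h) th
   (fun v hv => pdd i v (proj1 (andP hv))).
have cT : T1 <= c by apply: ltW; apply: le_lt_trans c1.
have lc := lowi c cT.
have pjc := pjlow c (introT andP (conj (ltW c1) (ltW c2))).
have [pic0 _] := andP (pb c cT i).
have pic : p c i < eta.
  by have := HM c (lt_trans tM c1); rewrite sub0r normrN ger0_norm.
have r1 : Q j i * m * (eps / 2) <= Q j i * m * p c j.
  by apply: ler_wpM2l => //; apply: mulr_ge0; apply: ltW.
have r2 : C * p c i <= C * eta by apply: ler_wpM2l => //; apply: ltW.
have ra : a <= p_rhs Q beta delta (x c) (p c) i.
  have e2 : Q j i * m * (eps / 2) = 2 * a by rewrite /a; field.
  move: lc; lra.
have [pti0 _] := andP (pb t tT' i).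
have pth : p (t + h) i < eta.
  have th' : M < t + h by apply: lt_trans th.
  have tT2 : T1 <= t + h by apply: ltW; apply: le_lt_trans tT' th.
  have [p0' _] := andP (pb (t + h) tT2 i).
  by have := HM (t + h) th'; rewrite sub0r normrN ger0_norm.
have ah : a * h <= p_rhs Q beta delta (x c) (p c) i * (t + h - t).
  by rewrite addrAC subrr add0r; apply: ler_wpM2r => //; apply: ltW.
have ah0 : 0 < a * h by apply: mulr_gt0.
move: Hc => /= Hc; lra.
Qed.

Unset Implicit Arguments.
Set Strict Implicit.

Theorem lemma1 (R : realType) (n : nat) (Q : 'M[R]_n) (beta delta : 'I_n -> R)
  (p x : R -> 'I_n -> R) :
  (2 <= n)%N ->
  generator Q -> irreducible_gen Q ->
  (forall i, 0 < beta i) -> (forall i, 0 <= delta i) ->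
  is_solution Q beta delta p x ->
  (forall i, 0 <= p 0 i <= 1) ->
  (forall i, 0 < x 0 i < 1) -> \sum_(i < n) x 0 i = 1 ->
  (exists i : 'I_n, p t i @[t --> +oo] --> (0 : R)) ->
  forall j : 'I_n, p t j @[t --> +oo] --> (0 : R).
Proof.
move=> _ G Irr bpos d0 sol p0 x0 s1 [i hi] j.
have b0 : forall k, 0 <= beta k by move=> k; apply: ltW.
have sol' := sol.
case: sol' => pc [xc [pd xd]].
have x00 : forall k, 0 < x 0 k by move=> k; case/andP: (x0 k).
have xp := @xpos R n Q beta delta p x G sol x00.
have xs := @xsum R n Q beta delta p x G sol s1.
have [T1 [T10 [m [m0 Hm]]]] := @xlow R n Q x G Irr xd xp xs.
have xle1 : forall t, 0 <= t -> forall k, x t k <= 1.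
  move=> t t0 k; rewrite -(xs t t0) (bigD1 k) //= lerDl.
  by apply: sumr_ge0 => l _; apply: ltW; apply: xp.
have xb : forall t, T1 <= t -> forall k, m <= x t k <= 1.
  move=> t tT k; rewrite Hm // xle1 //; apply: le_trans tT; exact: ltW.
have pb := @pbound R n Q beta delta p x G b0 d0 pc pd xp p0.
have pb' : forall t, T1 <= t -> forall k, 0 <= p t k <= 1.
  move=> t tT k; apply: pb; apply: le_trans tT; exact: ltW.
move: (Irr j i) => /connectP [s Hs Hl].
elim: s j Hs Hl => [|v s IH] j /=.
  by move=> _ <-.
move=> /andP[Qjv Hp] Hl.
have := IH v Hp Hl.
exact: (@pedge R n Q beta delta p x v j T1 m G b0 d0 pd T10 m0 xb pb' Qjv).
Qed.
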